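(* Let $n\neq 0,-1$ be an integer and $M=E_{T(2,2n+1)}\cup N(Kb)$ the graph manifold obtained by $4$-surgery along the $n$-twist knot $K_n$. For every irreducible representation $\bar\rho:\pi_1(M)\to SL(2,\mathbb{C})$, the restriction of $\bar\rho$ to $\pi_1(N(Kb))$ is irreducible.
   Context: The $n$-twist knot $K_n$ is the two-bridge knot whose group has the presentation $\pi_1(E_{K_n})=\langle \alpha,\beta\mid \omega^n\alpha=\beta\omega^n\rangle$ with $\alpha,\beta$ meridians and $\omega=\beta\alpha^{-1}\beta^{-1}\alpha$; its Alexander polynomial is $-nt^2+(2n+1)t-n$, and $K_1$ is the figure-eight knot. $N(Kb)$ is the twisted $I$-bundle over the Klein bottle, $E_{T(2,2n+1)}$ the exterior of the $(2,2n+1)$ torus knot. $M$ is the union of these along a torus, with $\pi_1(M)=\langle a,b,x,y\mid a^2=b^{2n+1},\ x^{-1}yx=y^{-1},\ \mu=y^{-1},\ h=y^{-1}x^2\rangle$, where $\pi_1(N(Kb))=\langle x,y\mid x^{-1}yx=y^{-1}\rangle$, $\mu=b^{-n}a$ is a meridian and $h$ a regular fiber of $E_{T(2,2n+1)}$. A representation is irreducible if the only subspaces of $\mathbb{C}^2$ invariant under its image are $\{0\}$ and $\mathbb{C}^2$. *)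

(* Defs.v *)
From HB Require Import structures.
From mathcomp Require Import all_boot all_order all_algebra.
From mathcomp Require Import complex reals.
Set Implicit Arguments. Unset Strict Implicit. Unset Printing Implicit Defensive.
Import Order.TTheory GRing.Theory Num.Theory.
Local Open Scope ring_scope.

Inductive gen_by {F : fieldType} (gs : seq 'M[F]_2) : 'M[F]_2 -> Prop :=
  | gen_one : gen_by gs 1
  | gen_gen g : g \in gs -> gen_by gs g
  | gen_inv g : gen_by gs g -> gen_by gs g^-1
  | gen_mul g h : gen_by gs g -> gen_by gs h -> gen_by gs (g * h).

(* A subgroup G of GL(2,F) is irreducible if the only subspaces W of F^2
   (column vectors) with g W <= W for all g in G are {0} and F^2.
   A subspace W is encoded as the row space of a matrix V whose rows are
   the transposes of spanning vectors of W; g W <= W becomes V g^T <= V. *)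
Definition irreducible_gen {F : fieldType} (gs : seq 'M[F]_2) : Prop :=
  forall V : 'M[F]_2,
    (forall g, gen_by gs g -> (V *m g^T <= V)%MS) ->
    \rank V = 0%N \/ \rank V = 2%N.

Definition SL2 {F : fieldType} (g : 'M[F]_2) : Prop := \det g = 1.

(* Images A,B,X,Y of a,b,x,y define a representation
   pi_1(M) -> SL(2,F), pi_1(M) = < a,b,x,y | a^2 = b^(2n+1), x^-1 y x = y^-1,
   mu = y^-1, h = y^-1 x^2 > with mu = b^-n a and h = a^2 (regular fiber). *)
Definition rep_M {F : fieldType} (n : int) (A B X Y : 'M[F]_2) : Prop :=
  [/\ SL2 A, SL2 B, SL2 X & SL2 Y] /\
  [/\ A ^+ 2 = B ^ (2 * n + 1),
      X^-1 * Y * X = Y^-1,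
      B ^ (- n) * A = Y^-1 &
      A ^+ 2 = Y^-1 * X ^+ 2].

(* Main.v *)
Require Import Defs.
From mathcomp Require Import all_boot all_order all_algebra.
From mathcomp Require Import ring.

Set Implicit Arguments. Unset Strict Implicit. Unset Printing Implicit Defensive.
Import Order.TTheory GRing.Theory Num.Theory.
Local Open Scope ring_scope.

Section S.
Variable F : fieldType.
Lemma det22 (M : 'M[F]_2) : \det M = M 0 0 * M 1 1 - M 0 1 * M 1 0.
Proof.
rewrite (expand_det_row _ 0) !big_ord_recl big_ord0 /cofactor !det_mx11 !mxE /=.
set a := lift _ _. set b := lift _ _.
have -> : b = 0 by apply/val_inj.
have -> : a = 1 by apply/val_inj.
rewrite /bump /= expr0 expr1 addr0 !mul1r mulN1r mulrN.
by rewrite mulrC [M 0 1 * _]mulrC.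
Qed.
Lemma mul22 (M N : 'M[F]_2) i j : (M * N) i j = M i 0 * N 0 j + M i 1 * N 1 j.
Proof.
rewrite -mulmxE mxE !big_ord_recl big_ord0 addr0.
by have -> : lift ord0 ord0 = 1 :> 'I_2 by apply/val_inj.
Qed.
Lemma one22 i j : (1 : 'M[F]_2) i j = (i == j)%:R.
Proof. by rewrite mxE. Qed.
Lemma ord2 (i : 'I_2) : i = 0 \/ i = 1.
Proof. by case: i => [[|[|//]] Hi]; [left|right]; apply/val_inj. Qed.

Lemma comm01 (C W : 'M[F]_2) : C * W = W * C -> W 0 1 = 0 -> W 1 0 != 0 -> C 0 1 = 0.
Proof.
move=> h w01 w10.
have e := congr1 (fun M : 'M[F]_2 => M 0 0) h; rewrite /= !mul22 w01 mul0r addr0 in e.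
have : C 0 1 * W 1 0 = 0.
  by rewrite -[LHS](addKr (C 0 0 * W 0 0)) e [W 0 0 * _]mulrC addNr.
by move/eqP; rewrite mulf_eq0 (negbTE w10) orbF => /eqP.
Qed.

Lemma ar1 (y a b : F) : y*y = 1 -> a*y + y*b = 0 -> b = -a.
Proof.
move=> e h; apply/eqP; rewrite -subr_eq0 opprK.
have -> : b + a = y * (a * y + y * b) + (b + a) * (1 - y * y) by ring.
by rewrite h e subrr mulr0 mulr0 addr0.
Qed.

Lemma core (X Y Z A B : 'M[F]_2) :
  \det X = 1 -> \det Y = 1 -> X 0 1 = 0 -> Y 0 1 = 0 -> Y * Z = 1 ->
  X * Y = Z * X -> A * A = X * X * Z -> B * (A * A) = (A * A) * B ->
  Y = (Y 0 0)%:M \/ (A 0 1 = 0 /\ B 0 1 = 0).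
Proof.
move=> hX hY x01 y01 hYZ hXY hA hB.
rewrite det22 x01 mul0r subr0 in hX.
rewrite det22 y01 mul0r subr0 in hY.
have X0 : X 0 0 != 0 by apply/eqP => h; move: hX; rewrite h mul0r => /eqP; rewrite eq_sym oner_eq0.
have Y0 : Y 0 0 != 0 by apply/eqP => h; move: hY; rewrite h mul0r => /eqP; rewrite eq_sym oner_eq0.
have e00 := congr1 (fun M : 'M[F]_2 => M 0 0) hYZ; rewrite /= mul22 one22 /= y01 mul0r addr0 in e00.
have e01 := congr1 (fun M : 'M[F]_2 => M 0 1) hYZ; rewrite /= mul22 one22 /= y01 mul0r addr0 in e01.
have e10 := congr1 (fun M : 'M[F]_2 => M 1 0) hYZ; rewrite /= mul22 one22 /= in e10.
have e11 := congr1 (fun M : 'M[F]_2 => M 1 1) hYZ; rewrite /= mul22 one22 /= in e11.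
have z01 : Z 0 1 = 0.
  by move/eqP: e01; rewrite mulf_eq0 (negbTE Y0) => /eqP.
rewrite z01 mulr0 add0r in e11.
have f00 := congr1 (fun M : 'M[F]_2 => M 0 0) hXY; rewrite /= !mul22 x01 z01 !mul0r !addr0 in f00.
have f10 := congr1 (fun M : 'M[F]_2 => M 1 0) hXY; rewrite /= !mul22 in f10.
have zy : Z 0 0 = Y 0 0.
  by apply: (mulIf X0); rewrite -f00 mulrC.
rewrite zy in e00 e10.
set y : F := Y 0 0 in Y0 hY e00 e10 f10 zy *.
have y11 : Y 1 1 = y.
  by apply: (mulfI Y0); rewrite hY e00.
have z11 : Z 1 1 = y.
  by apply: (mulfI Y0); rewrite -{1}y11 e11 e00.
have z10 : Z 1 0 = - Y 1 0.
  by apply: (@ar1 y (Y 1 0) (Z 1 0) e00); rewrite -{2}y11.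
have [c0|c0] := eqVneq (Y 1 0) 0.
  left; apply/matrixP => i j; rewrite mxE.
  by case: (ord2 i) => ->; case: (ord2 j) => -> //=; rewrite ?mulr1n ?mulr0n ?y11.
right.
rewrite ?zy ?z10 ?z11 ?y11 in f10.
have x11 : X 1 1 = - X 0 0.
  have : Y 1 0 * (X 1 1 + X 0 0) = 0.
    have -> : Y 1 0 * (X 1 1 + X 0 0) = (X 1 0 * y + X 1 1 * Y 1 0) - (- Y 1 0 * X 0 0 + y * X 1 0) by ring.
    by rewrite f10 subrr.
  move/eqP; rewrite mulf_eq0 (negbTE c0) /= addr_eq0 => /eqP //.
have xx : X 0 0 * X 0 0 = -1.
  by move: hX; rewrite x11 mulrN => /eqP; rewrite eqr_oppLR => /eqP.
have W01 : (X * X * Z) 0 1 = 0.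
  by rewrite !mul22 x01 z01; ring.
have W10 : (X * X * Z) 1 0 = Y 1 0.
  rewrite !mul22 x01 zy z10 x11.
  have -> : (X 1 0 * X 0 0 + - X 0 0 * X 1 0) * y + (X 1 0 * 0 + - X 0 0 * - X 0 0) * - Y 1 0
     = - (X 0 0 * X 0 0) * Y 1 0 by ring.
  by rewrite xx opprK mul1r.
rewrite -hA in W01 W10.
split.
  apply: (comm01 _ W01); last by rewrite W10.
  by rewrite mulrA.
by apply: (comm01 hB W01); rewrite W10.
Qed.

Lemma unitSL (g : 'M[F]_2) : \det g = 1 -> g \is a GRing.unit.
Proof. by move=> h; rewrite -[_ \is a _]/(g \in unitmx) unitmxE h unitr1. Qed.

Lemma gen_invariant (gs : seq 'M[F]_2) (V : 'M[F]_2) :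
  (forall g, g \in gs -> (V *m g^T <= V)%MS) ->
  forall g, gen_by gs g -> (V *m g^T <= V)%MS.
Proof.
move=> hg g; elim => {g} [|g gi|g _ IH|g h _ IHg _ IHh].
- by rewrite trmx1 mulmx1.
- exact: hg.
- have [ug|nug] := boolP (g \is a GRing.unit); last by rewrite invr_out.
  have ugT : g^T \in unitmx by rewrite unitmx_tr.
  have eqV : (V *m g^T == V)%MS.
    by rewrite -mxrank_leqif_eq // mxrankMfree // row_free_unit.
  have E := eqmxMr (invmx (g^T)) (eqmxP eqV).
  rewrite -mulmxA mulmxV // mulmx1 in E.
  by rewrite -[g^-1]/(invmx g) trmx_inv -E.
- rewrite -mulmxE trmx_mul mulmxA.
  exact: submx_trans (submxMr _ IHh) IHg.
Qed.

Lemma rank1_vec (V : 'M[F]_2) : \rank V = 1%N -> exists v : 'rV[F]_2, v != 0 /\ (v == V)%MS.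
Proof.
move=> r1.
case: (pickP (fun i => row i V != 0)) => [i ri | h].
  exists (row i V); split => //.
  by rewrite -mxrank_leqif_eq ?row_sub // rank_rV ri r1.
have V0 : V = 0.
  by apply/row_matrixP => i; rewrite row0; move/negbFE: (h i) => /eqP.
by move: r1; rewrite V0 mxrank0.
Qed.

Lemma eig (v : 'rV[F]_2) (V g : 'M[F]_2) : (v == V)%MS -> (V *m g^T <= V)%MS ->
  exists c, v *m g^T = c *: v.
Proof.
move=> /eqmxP E h.
have : (v *m g^T <= v)%MS by rewrite (eqmxMr _ E) E.
case/submxP => D ->; exists (D 0 0).
by rewrite {1}[D]mx11_scalar mul_scalar_mx.
Qed.

Lemma eig_back (v : 'rV[F]_2) (V g : 'M[F]_2) c : (v == V)%MS -> v *m g^T = c *: v ->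
  (V *m g^T <= V)%MS.
Proof.
move=> /eqmxP E h.
by rewrite -(eqmxMr _ E) h -E scalemx_sub.
Qed.

Lemma basis (v : 'rV[F]_2) : v != 0 -> exists P : 'M[F]_2, P \in unitmx /\ row 0 P = v.
Proof.
move=> v0.
have [a0|a0] := eqVneq (v 0 0) 0.
  have b0 : v 0 1 != 0.
    apply: contra v0 => /eqP b0; apply/eqP/rowP => j; rewrite mxE.
    by case: (ord2 j) => ->.
  exists (\matrix_(i, j) if i == 0 then v 0 j else (j == 0)%:R); split.
    rewrite unitmxE det22 !mxE /= a0 mul0r sub0r mulr1 unitrN unitfE //.
  by apply/rowP => j; rewrite !mxE.
exists (\matrix_(i, j) if i == 0 then v 0 j else (j == 1)%:R); split.
  by rewrite unitmxE det22 !mxE /= mulr0 subr0 mulr1 unitfE.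
by apply/rowP => j; rewrite !mxE.
Qed.

Lemma phi01 (P g : 'M[F]_2) c : P \in unitmx -> row 0 P *m g^T = c *: row 0 P ->
  (P *m g^T *m invmx P) 0 1 = 0.
Proof.
move=> uP h.
transitivity (row 0 (P *m g^T *m invmx P) 0 1); first by rewrite !mxE.
by rewrite !row_mul h -scalemxAl -row_mul mulmxV // !mxE /= mulr0.
Qed.

Lemma phi01_back (P g : 'M[F]_2) : P \in unitmx -> (P *m g^T *m invmx P) 0 1 = 0 ->
  row 0 P *m g^T = (P *m g^T *m invmx P) 0 0 *: row 0 P.
Proof.
move=> uP.
set M := P *m g^T *m invmx P => h.
have E : P *m g^T = M *m P by rewrite /M mulmxKV.
rewrite -row_mul E; apply/rowP => j.
have -> : (row 0 (M *m P)) 0 j = (M * P) 0 j by rewrite mxE.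
by rewrite mul22 h mul0r addr0 !mxE.
Qed.

Lemma scalar_case (n : int) (A B : 'M[F]_2) (y : F) : B \is a GRing.unit -> y * y = 1 ->
  A ^+ 2 = B ^ (2 * n + 1) -> B ^ (- n) * A = (y%:M)^-1 -> B = 1 /\ A = y%:M.
Proof.
move=> uB yy r1 r3.
have SS : (y%:M : 'M[F]_2) * y%:M = 1 by rewrite -mulmxE -scalar_mxM yy.
have uS : (y%:M : 'M[F]_2) \is a GRing.unit.
  by apply: unitSL; rewrite det_scalar expr2 yy.
have Si : (y%:M : 'M[F]_2)^-1 = y%:M.
  by rewrite -[LHS]mulr1 -SS mulrA mulVr // mul1r.
rewrite Si in r3.
have eA : A = B ^ n * y%:M.
  by rewrite -r3 mulrA -exprzDr // addrN expr0z mul1r.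
have SC : forall M : 'M[F]_2, y%:M * M = M * y%:M.
  by move=> M; rewrite -!mulmxE scalar_mxC.
have AA : A ^+ 2 = B ^ (n + n).
  by rewrite expr2 eA exprzDr // -mulrA [y%:M * (B ^ n * y%:M)]mulrA SC -[B ^ n * y%:M * y%:M]mulrA SS mulr1.
have e2 : 2 * n + 1 = (n + n) + 1 by rewrite mulrDl mul1r.
rewrite AA e2 (exprzDr uB (n + n) 1) expr1z in r1.
have B1 : B = 1.
  apply: (mulrI (unitrXz (n + n) uB)).
  by rewrite -r1 mulr1.
split => //.
by rewrite eA B1 exp1rz mul1r.
Qed.

End S.

Lemma mainF (F : fieldType) (n : int) (A B X Y : 'M[F]_2) :
  rep_M n A B X Y -> irreducible_gen [:: A; B; X; Y] -> irreducible_gen [:: X; Y].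
Proof.
move=> [[sA sB sX sY] [r1 r2 r3 r4]] hirr V hV.
have hX : (V *m X^T <= V)%MS by apply: hV; apply: gen_gen; rewrite inE eqxx.
have hY : (V *m Y^T <= V)%MS by apply: hV; apply: gen_gen; rewrite !inE eqxx orbT.
have uA := unitSL sA. have uB := unitSL sB. have uX := unitSL sX. have uY := unitSL sY.
have rk := rank_leq_col V.
move: rk; case E: (\rank V) => [|[|[|k]]] // _; [by left| |by right].
exfalso.
suff [hA hB] : (V *m A^T <= V)%MS /\ (V *m B^T <= V)%MS.
  have all : forall g, gen_by [:: A; B; X; Y] g -> (V *m g^T <= V)%MS.
    apply: gen_invariant => g; rewrite !inE => /or4P [] /eqP -> //.
  by case: (hirr V all); rewrite E.
have [v [v0 eqv]] := rank1_vec E.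
have [cX eX] := eig eqv hX.
have [cY eY] := eig eqv hY.
have [P [uP rP]] := basis v0.
pose phi (g : 'M[F]_2) := P *m g^T *m invmx P.
have phiM : forall g h, phi (g * h) = phi h * phi g.
  move=> g h; rewrite /phi -!mulmxE trmx_mul.
  by rewrite !mulmxA -[P *m h^T *m invmx P *m P]mulmxA mulVmx // mulmx1.
have phi1 : phi 1 = 1 by rewrite /phi trmx1 mulmx1 mulmxV.
have phidet : forall g, \det (phi g) = \det g.
  move=> g; rewrite /phi !det_mulmx det_tr det_inv mulrC mulrA.
  by rewrite mulVf ?mul1r // -unitfE -unitmxE.
have YX : Y * X = X * Y^-1.
  by rewrite -r2 !mulrA mulrV // mul1r.
have AA : A * A = Y^-1 * (X * X) by rewrite -!expr2.
have BAA : A * A * B = B * (A * A).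
  rewrite -expr2 r1.
  transitivity (B ^ (2 * n + 1 + 1)); first by rewrite (exprzDr uB (2 * n + 1) 1) expr1z.
  by rewrite [2 * n + 1 + 1]addrC (exprzDr uB 1 (2 * n + 1)) expr1z.
have := @core F (phi X) (phi Y) (phi (Y^-1)) (phi A) (phi B).
rewrite !phidet sX sY -!phiM -YX -AA BAA mulVr // phi1.
rewrite (phi01 uP (_ : row 0 P *m X^T = cX *: row 0 P)) ?rP //.
rewrite (phi01 uP (_ : row 0 P *m Y^T = cY *: row 0 P)) ?rP //.
case=> // [eYs|[a01 b01]].
  set y := phi Y 0 0 in eYs.
  have Ysc : Y = y%:M.
    have : Y^T = y%:M.
      have : invmx P *m phi Y *m P = Y^T.
        by rewrite /phi !mulmxA mulVmx // mul1mx mulmxKV.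
      by rewrite eYs mul_mx_scalar -scalemxAl mulVmx // scalemx1 => <-.
    by move/(congr1 trmx); rewrite trmxK tr_scalar_mx.
  have yy : y * y = 1 by move: sY; rewrite /SL2 Ysc det_scalar expr2.
  rewrite Ysc in r3.
  have [B1 As] := scalar_case uB yy r1 r3.
  rewrite B1 As trmx1 mulmx1 tr_scalar_mx mul_mx_scalar.
  by split => //; apply: scalemx_sub.
split.
  apply: (eig_back eqv (c := phi A 0 0)); rewrite -rP; exact: phi01_back.
apply: (eig_back eqv (c := phi B 0 0)); rewrite -rP; exact: phi01_back.
Qed.

From mathcomp Require Import complex reals.

Theorem proposition3p8 (R : realType) (n : int) :
  n != 0 -> n != -1 ->
  forall A B X Y : 'M[R[i]]_2,
    rep_M n A B X Y ->
    irreducible_gen [:: A; B; X; Y] ->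
    irreducible_gen [:: X; Y].
Proof.
move=> _ _ A B X Y; exact: mainF.
Qed.
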